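(* Let $n,N,L\ge1$ be integers and $0<p<1$. In the random model described in the context, for every address $\mathbf{x}\in C$ and every integer $s\in[2^n]$, the probability that $\mathbf{x}$ has order $s$ in $\mathcal{G}$ is $$P(\mathbf{x}\in\mathsf{X}_s)=\begin{cases}\left(\sum_{i=\ell}^{n}\binom{n}{i}p^i(1-p)^{n-i}\right)^N-\left(\sum_{i=\ell+1}^{n}\binom{n}{i}p^i(1-p)^{n-i}\right)^N, & s=2^\ell \text{ for some } \ell\in\{0,1,\dots,n\},\\[2pt] 0, & \text{otherwise.}\end{cases}$$
   Context: Model: $M=2^n$, addresses $C=\{0,1\}^n$; each address $\mathbf{x}$ carries a strand $(\mathbf{x},\mathbf{d})$ with data $\mathbf{d}$ independent uniform on $\{0,1\}^L$. Each strand is transmitted $N$ times through $\mathsf{BEC}(p)$ (each symbol independently replaced by $*$ with probability $p$, independently across transmissions and strands); $\mathcal{S}_N((\mathbf{x},\mathbf{d}))$ is the multiset of the $N$ reads of that strand. An address $\mathbf{x}'$ is compatible with a read $(\mathbf{y},\mathbf{d}')$ if it coincides with $\mathbf{y}$ at all non-erased positions of $\mathbf{y}$. The bipartite graph $\mathcal{G}$ has left vertices $C$, right vertices all $MN$ reads, and an edge between an address and a read iff they are compatible; $E_{(\mathbf{y},\mathbf{d}')}$ denotes the set of left neighbours of a read. A left vertex $\mathbf{x}$ has order $s$ if $\min\{|E_{(\mathbf{y},\mathbf{d}')}|:(\mathbf{y},\mathbf{d}')\in\mathcal{S}_N((\mathbf{x},\mathbf{d}))\}=s$; $\mathsf{X}_s$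 is the set of left vertices of order $s$. *)

(* Defs.v *)
(* discrete finite probability space for the DNA-storage
   random model (addresses, uniform data, N transmissions through BEC(p)). *)
From HB Require Import structures.
From mathcomp Require Import all_boot all_order all_algebra.
Set Implicit Arguments. Unset Strict Implicit. Unset Printing Implicit Defensive.
Import Order.TTheory GRing.Theory Num.Theory.
Local Open Scope ring_scope.

Definition Addr (n : nat) := {ffun 'I_n -> bool}.
Definition Data (L : nat) := {ffun 'I_L -> bool}.

(* erasure pattern of one transmission of one strand: true = erased
   (address positions, data positions) *)
Definition Erasure (n L : nat) := ({ffun 'I_n -> bool} * {ffun 'I_L -> bool})%type.

(* an outcome: the data of every strand, and the erasure patterns of the
   N transmissions of every strand *)
Definition Outcome (n N L : nat) :=
  ({ffun Addr n -> Data L} * {ffun Addr n -> {ffun 'I_N -> Erasure n L}})%type.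

(* a read: symbols in {0,1,*}, with None = * *)
Definition Read (n L : nat) :=
  ({ffun 'I_n -> option bool} * {ffun 'I_L -> option bool})%type.

Definition bec {R : pzRingType} (p : R) (b : bool) : R := if b then p else 1 - p.

(* probability of an outcome: data uniform and independent, erasures i.i.d. *)
Definition weight {R : fieldType} (n N L : nat) (p : R) (w : Outcome n N L) : R :=
  \prod_(x : Addr n)
     (((2 ^ L)%N%:R)^-1 *
      \prod_(j < N) ((\prod_(i < n) bec p ((w.2 x j).1 i)) *
                     (\prod_(k < L) bec p ((w.2 x j).2 k)))).

Arguments weight {R} n N L p w.
Definition Prob {R : fieldType} (n N L : nat) (p : R) (E : pred (Outcome n N L)) : R :=
  \sum_(w : Outcome n N L | E w) weight n N L p w.

Definition read (n N L : nat) (w : Outcome n N L) (x : Addr n) (j : 'I_N) : Read n L :=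
  ([ffun i => if (w.2 x j).1 i then None else Some (x i)],
   [ffun k => if (w.2 x j).2 k then None else Some (w.1 x k)]).

Definition compatible (n L : nat) (x' : Addr n) (r : Read n L) : bool :=
  [forall i, (r.1 i == None) || (r.1 i == Some (x' i))].

(* E_r : set of left neighbours of read r in the bipartite graph G *)
Definition nbhd (n L : nat) (r : Read n L) : {set Addr n} :=
  [set x' | compatible x' r].

Definition has_order (n N L : nat) (w : Outcome n N L) (x : Addr n) (s : nat) : bool :=
  [exists j : 'I_N, #|nbhd (read w x j)| == s] &&
  [forall j : 'I_N, s <= #|nbhd (read w x j)|]%N.

Definition binom_tail {R : pzRingType} (n l : nat) (p : R) : R :=
  \sum_(l <= i < n.+1) 'C(n, i)%:R * p ^+ i * (1 - p) ^+ (n - i).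
Arguments Prob {R} n N L p E.

(* Main.v *)
Require Import Defs.
From HB Require Import structures.
From mathcomp Require Import all_boot all_order all_algebra.
Set Implicit Arguments. Unset Strict Implicit. Unset Printing Implicit Defensive.
Import Order.TTheory GRing.Theory Num.Theory.
Local Open Scope ring_scope.


Lemma sum_family (R : comNzRingType) (I J : finType) (Q : I -> pred J) (F : I -> J -> R) :
  \sum_(f : {ffun I -> J} | [forall i, Q i (f i)]) \prod_i F i (f i) =
  \prod_i \sum_(j | Q i j) F i j.
Proof.
rewrite (eq_bigr (fun i => \sum_j (if Q i j then F i j else 0))); last first.
  by move=> i _; rewrite big_mkcond.
rewrite bigA_distr_bigA big_mkcond /=; apply: eq_bigr => f _.
case: ifP => [/forallP H|/negbT].
  by apply: eq_bigr => i _; rewrite H.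
rewrite negb_forall => /existsP [i Hi].
by rewrite (bigD1 i) //= (negbTE Hi) mul0r.
Qed.

Lemma sum_at (R : comNzRingType) (I J : finType) (x0 : I) (P : pred J) (F : I -> J -> R) :
  \sum_(f : {ffun I -> J} | P (f x0)) \prod_i F i (f i) =
  (\sum_(j | P j) F x0 j) * \prod_(i | i != x0) \sum_j F i j.
Proof.
rewrite (eq_bigl (fun f : {ffun I -> J} => [forall i, (i == x0) ==> P (f i)])); last first.
  move=> f; apply/idP/forallP => [H i|H]; first by apply/implyP => /eqP ->.
  by have := H x0; rewrite eqxx.
rewrite (sum_family (fun i j => (i == x0) ==> P j)) (bigD1 x0) //= eqxx /=.
congr (_ * _); apply: eq_bigr => i /negbTE ->; by [].
Qed.

Lemma sum_prod_bec (R : comNzRingType) (n : nat) (p : R) :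
  \sum_(u : {ffun 'I_n -> bool}) \prod_i bec p (u i) = 1.
Proof.
rewrite -(bigA_distr_bigA (fun (i : 'I_n) b => bec p b)) /= big1 // => i _.
by rewrite big_bool /bec /= addrC subrK.
Qed.
Definition cnt n (u : {ffun 'I_n -> bool}) := #|[set i | u i]|.

Lemma card_nbhd n N L (w : Outcome n N L) x j :
  #|nbhd (read w x j)| = (2 ^ cnt ((w.2 x j).1))%N.
Proof.
set u := (w.2 x j).1.
pose f (x' : Addr n) := [set i | x' i != x i].
have finj : injective f.
  move=> x1 x2 H; apply/ffunP => i.
  have: (i \in f x1) = (i \in f x2) by rewrite H.
  rewrite /f !inE.
  by case: (x1 i); case: (x2 i); case: (x i).
rewrite /cnt -card_powerset -(card_imset _ finj); apply: eq_card => S; apply/imsetP/idP.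
  case=> x' Hx' ->; rewrite inE; apply/subsetP => i; rewrite !inE.
  move: Hx'; rewrite inE /compatible => /forallP /(_ i); rewrite /read /= ffunE /u.
  by case: ((w.2 x j).1 i) => //= /eqP [] ->; rewrite eqxx.
rewrite inE => /subsetP HS.
exists [ffun i => if i \in S then ~~ x i else x i].
  rewrite inE /compatible; apply/forallP => i; rewrite /read /= !ffunE.
  case Hu: ((w.2 x j).1 i) => //=.
  case HiS: (i \in S); last by rewrite eqxx.
  by have := HS i HiS; rewrite inE /u Hu.
apply/setP => i; rewrite /f !inE ffunE.
by case: (i \in S); case: (x i).
Qed.
Lemma prod_bec (R : comNzRingType) n (p : R) (u : {ffun 'I_n -> bool}) :
  \prod_i bec p (u i) = p ^+ cnt u * (1 - p) ^+ (n - cnt u).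
Proof.
rewrite (bigID (fun i => u i)) /=.
rewrite (eq_bigr (fun _ => p)); last by move=> i; case: (u i).
rewrite [X in _ * X](eq_bigr (fun _ => 1 - p)); last by move=> i; case: (u i).
rewrite !prodr_const /cnt; congr (_ ^+ _ * _ ^+ _).
  by apply: eq_card => i; rewrite inE.
have H := cardC [set i | u i]; rewrite card_ord in H.
transitivity (#|[set i | u i]| + #|[predC [set i | u i]]| - #|[set i | u i]|)%N; last by rewrite H.
by rewrite addKn; apply: eq_card => i; rewrite !inE.
Qed.

Lemma tail_eq (R : comNzRingType) n m (p : R) :
  \sum_(u : {ffun 'I_n -> bool} | (m <= cnt u)%N) \prod_i bec p (u i) = binom_tail n m p.
Proof.
under eq_bigr do rewrite prod_bec.
pose h (A : {set 'I_n}) := [ffun i => i \in A].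
have hcnt A : cnt (h A) = #|A|.
  by apply: eq_card => i; rewrite inE ffunE.
rewrite (reindex h); last first.
  exists (fun u : {ffun 'I_n -> bool} => [set i | u i]) => [A _|u _].
    by apply/setP => i; rewrite inE ffunE.
  by apply/ffunP => i; rewrite ffunE inE.
under eq_bigl do rewrite hcnt.
under eq_bigr do rewrite hcnt.
rewrite (partition_big (fun A : {set 'I_n} => (inord #|A| : 'I_n.+1)) (fun j : 'I_n.+1 => m <= j)%N); last first.
  move=> A HA; rewrite inordK // ltnS; apply: leq_trans (max_card _) _; by rewrite card_ord.
rewrite /binom_tail big_geq_mkord; apply: eq_bigr => j Hj.
have HA (A : {set 'I_n}) : ((m <= #|A|)%N && (inord #|A| == j)) = (#|A| == j :> nat).
  have hA : (#|A| < n.+1)%N by rewrite ltnS; apply: leq_trans (max_card _) _; rewrite card_ord.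
  apply/idP/idP.
    by case/andP => _ /eqP <-; rewrite inordK.
  move/eqP => E; apply/andP; split; first by rewrite E.
  by apply/eqP/val_inj; rewrite /= E inordK.
under eq_bigl do rewrite HA.
rewrite (eq_bigr (fun _ => p ^+ j * (1 - p) ^+ (n - j))); last by move=> A /eqP ->.
rewrite sumr_const.
have -> : #|[pred A : {set 'I_n} | #|A| == j]| = 'C(n, j).
  by have := card_draws 'I_n j; rewrite card_ord => <-; apply: eq_card => A; rewrite inE.
Show.
by rewrite -mulrA mulr_natl.
Qed.

Definition gE (R : pzRingType) n N L (p : R) (e : {ffun 'I_N -> Erasure n L}) :=
  \prod_(j < N) ((\prod_(i < n) bec p ((e j).1 i)) * (\prod_(k < L) bec p ((e j).2 k))).

Lemma sum_gE_ge (R : comNzRingType) n N L (p : R) m :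
  \sum_(e : {ffun 'I_N -> Erasure n L} | [forall j, (m <= cnt (e j).1)%N]) gE p e =
  binom_tail n m p ^+ N.
Proof.
rewrite /gE (sum_family (fun (j : 'I_N) (uv : Erasure n L) => (m <= cnt uv.1)%N)
  (fun j uv => (\prod_(i < n) bec p (uv.1 i)) * (\prod_(k < L) bec p (uv.2 k)))).
transitivity (\prod_(j < N) binom_tail n m p); last by rewrite prodr_const card_ord.
apply: eq_bigr => j _.
transitivity (\sum_(u : {ffun 'I_n -> bool} | (m <= cnt u)%N) \sum_(v : {ffun 'I_L -> bool})
   ((\prod_(i < n) bec p (u i)) * (\prod_(k < L) bec p (v k)))).
  by rewrite pair_big; apply: eq_bigl => uv; rewrite andbT.
under eq_bigr do rewrite -mulr_sumr sum_prod_bec mulr1.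
by rewrite tail_eq.
Qed.

Lemma sum_gE (R : comNzRingType) n N L (p : R) :
  \sum_(e : {ffun 'I_N -> Erasure n L}) gE p e = 1.
Proof.
have E1 : \sum_(e : {ffun 'I_N -> Erasure n L} | [forall j : 'I_N, (0 <= cnt (e j).1)%N]) gE p e
   = \sum_(e : {ffun 'I_N -> Erasure n L}) gE p e.
  by apply: eq_big => // e; apply/forallP.
have E2 : \sum_(u : {ffun 'I_n -> bool} | (0 <= cnt u)%N) \prod_i bec p (u i) = 1.
  rewrite -[RHS](sum_prod_bec n p); apply: eq_big => // u.
apply: (etrans (esym E1)); by rewrite sum_gE_ge -tail_eq E2 expr1n.
Qed.

Lemma key (R : numFieldType) n N L (p : R) (x : Addr n)
  (P : pred {ffun 'I_N -> Erasure n L}) :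
  \sum_(w : Outcome n N L | P (w.2 x)) weight n N L p w = \sum_(e | P e) gE p e.
Proof.
set c := ((2 ^ L)%N%:R)^-1 : R.
transitivity (\sum_(w1 : {ffun Addr n -> Data L})
   \sum_(w2 : {ffun Addr n -> {ffun 'I_N -> Erasure n L}} | P (w2 x))
     ((\prod_(y : Addr n) c) * \prod_(y : Addr n) gE p (w2 y))).
  rewrite pair_big /=; apply: eq_big => [w|w _] //.
  by rewrite /weight big_split.
under eq_bigr do rewrite -mulr_sumr.
have HK : #|{ffun Addr n -> Data L}| = ((2 ^ L) ^ #|Addr n|)%N.
  by rewrite card_ffun card_ffun card_bool card_ord.
rewrite -mulr_suml sumr_const HK prodr_const.
rewrite -mulr_natr natrX -exprMn mulVf ?expr1n ?mul1r; last first.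
  by rewrite pnatr_eq0 -lt0n expn_gt0.
rewrite (sum_at x P (fun y e => gE p e)) [X in _ * X]big1 ?mulr1 // => y _.
exact: sum_gE.
Qed.

Theorem lemma8 (R : realFieldType) (n N L : nat) (p : R)
  (hn : (1 <= n)%N) (hN : (1 <= N)%N) (hL : (1 <= L)%N)
  (hp0 : 0 < p) (hp1 : p < 1) (x : Addr n) (s : nat)
  (hs : (1 <= s <= 2 ^ n)%N) :
  (forall l : nat, (l <= n)%N -> s = (2 ^ l)%N ->
     Prob n N L p (fun w => has_order w x s) =
       binom_tail n l p ^+ N - binom_tail n l.+1 p ^+ N) /\
  ((forall l : nat, (l <= n)%N -> s <> (2 ^ l)%N) ->
     Prob n N L p (fun w => has_order w x s) = 0).
Proof.
have cnt_le (u : {ffun 'I_n -> bool}) : (cnt u <= n)%N.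
  by rewrite /cnt; apply: leq_trans (max_card _) _; rewrite card_ord.
split.
  move=> l hl Hs.
  have HO : forall w : Outcome n N L, has_order w x s =
     ([forall j, (l <= cnt ((w.2 x j).1))%N] && ~~ [forall j, (l.+1 <= cnt ((w.2 x j).1))%N]).
    move=> w; rewrite /has_order Hs negb_forall.
    apply/andP/andP => [[/existsP [j Hj] /forallP H]|[/forallP H /existsP [j Hj]]].
      split; first by apply/forallP => i; have := H i; rewrite card_nbhd leq_exp2l.
      apply/existsP; exists j; move: Hj; rewrite card_nbhd eqn_exp2l // => /eqP ->.
      by rewrite ltnn.
    split.
      apply/existsP; exists j; rewrite card_nbhd eqn_exp2l // eqn_leq H andbT.
      by rewrite leqNgt.
    apply/forallP => i; rewrite card_nbhd leq_exp2l //; exact: H.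
  rewrite /Prob.
  under eq_bigl do rewrite HO.
  set A := fun w : Outcome n N L => [forall j, (l <= cnt ((w.2 x j).1))%N].
  set B := fun w : Outcome n N L => [forall j, (l.+1 <= cnt ((w.2 x j).1))%N].
  have Hsplit : \sum_(w | A w) weight n N L p w =
      \sum_(w | B w) weight n N L p w + \sum_(w | A w && ~~ B w) weight n N L p w.
    rewrite (bigID B) /=; congr (_ + _); apply: eq_bigl => w.
    case HB: (B w); rewrite ?andbT ?andbF //.
    apply/forallP => j; move/forallP: HB => /(_ j); exact: ltnW.
  have EA := key p x (fun e : {ffun 'I_N -> Erasure n L} => [forall j, (l <= cnt ((e j).1))%N]).
  have EB := key p x (fun e : {ffun 'I_N -> Erasure n L} => [forall j, (l.+1 <= cnt ((e j).1))%N]).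
  rewrite sum_gE_ge in EA; rewrite sum_gE_ge in EB.
  by rewrite -EA -EB Hsplit /A /B addrC addKr.
move=> Hnp; rewrite /Prob big_mkcond big1 // => w _.
case: ifP => // /andP [/existsP [j /eqP Hj] _]; exfalso.
by apply: (Hnp (cnt (w.2 x j).1)); rewrite ?cnt_le // -Hj card_nbhd.
Qed.
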